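(* Let $a$ be an integer, $d\ge1$ an integer and $x\ge6$ real. Then $$0<\rho(a,d)-A\sum_{\substack{1\le t\le x\\ t\equiv a\pmod d}}r(t)<\frac{1.28}{x}.$$
   Context: $A=\prod_p\bigl(1-\frac{1}{p(p-1)}\bigr)$ (product over primes), $r(t)=\frac{1}{t^2}\prod_{p\mid t}\frac{p^2-1}{p^2-p-1}$, and $\rho(a,d)=A\sum_{t\ge1,\ t\equiv a\pmod d}r(t)$ (the average over primes $p$ of the proportion of elements of $\mathbb F_p^*$ with index $[\mathbb F_p^*:\langle x\rangle]\equiv a\pmod d$). *)

(* Defs.v *)
From Stdlib Require Import Reals ZArith List.
From Coquelicot Require Import Coquelicot.
From mathcomp Require prime.
Open Scope R_scope.

Definition A_partial (N : nat) : R :=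
  fold_right (fun p acc => (1 - / (INR p * (INR p - 1))) * acc) 1
    (List.filter prime.prime (List.seq 0 (S N))).

Definition A : R := real (Lim_seq A_partial).

Definition r (t : nat) : R :=
  / (INR t ^ 2) *
  fold_right (fun p acc => ((INR p ^ 2 - 1) / (INR p ^ 2 - INR p - 1)) * acc) 1
    (prime.primes t).

Definition congb (t : nat) (a : Z) (d : nat) : bool :=
  Z.eqb ((Z.of_nat t - a) mod Z.of_nat d)%Z 0%Z.

Definition rterm (a : Z) (d : nat) (t : nat) : R :=
  if (Nat.leb 1 t && congb t a d)%bool then r t else 0.

Definition rho (a : Z) (d : nat) : R := A * Series (rterm a d).

Definition rho_trunc (a : Z) (d : nat) (x : R) : R :=
  A * sum_n (rterm a d) (Z.to_nat (Int_part x)).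

(* Main.v *)
Require Import Defs.
From Stdlib Require Import Reals ZArith.
From Coquelicot Require Import Coquelicot.
From Stdlib Require Import List Lra Lia QArith Qreals.
From mathcomp Require Import ssreflect ssrbool ssrnat eqtype prime div seq path.
From mathcomp Require Import zify.
Open Scope R_scope.

Open Scope R_scope.

Definition lsum {A} (l : list A) (f : A -> R) : R := fold_right (fun a acc => f a + acc) 0 l.
Definition lprod {A} (l : list A) (f : A -> R) : R := fold_right (fun a acc => f a * acc) 1 l.

Lemma lsum_app {A} (l1 l2 : list A) f : lsum (app l1 l2) f = lsum l1 f + lsum l2 f.
Proof. induction l1 as [|a l IH]; simpl; [lra| rewrite IH; lra]. Qed.
Lemma lprod_app {A} (l1 l2 : list A) f : lprod (app l1 l2) f = lprod l1 f * lprod l2 f.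
Proof. induction l1 as [|a l IH]; simpl; [lra| rewrite IH; lra]. Qed.
Lemma catE {A} (l1 l2 : list A) : cat l1 l2 = app l1 l2.
Proof. induction l1 as [|a l IH]; simpl; [done| by rewrite IH]. Qed.
Lemma lsum_cat {A} (l1 l2 : list A) f : lsum (cat l1 l2) f = lsum l1 f + lsum l2 f.
Proof. rewrite catE; apply lsum_app. Qed.
Lemma lprod_cat {A} (l1 l2 : list A) f : lprod (cat l1 l2) f = lprod l1 f * lprod l2 f.
Proof. rewrite catE; apply lprod_app. Qed.
Lemma lsum_map {A B} (l : list A) (g : A -> B) f : lsum (List.map g l) f = lsum l (fun a => f (g a)).
Proof. induction l as [|a l IH]; simpl; [lra| rewrite IH; lra]. Qed.
Lemma lsum_ext {A} (l : list A) f g : (forall a, List.In a l -> f a = g a) -> lsum l f = lsum l g.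
Proof. induction l as [|a l IH]; simpl; intros H; [lra|]. rewrite H; [|now left]. rewrite IH; [lra|]. intros; apply H; now right. Qed.
Lemma lprod_ext {A} (l : list A) f g : (forall a, List.In a l -> f a = g a) -> lprod l f = lprod l g.
Proof. induction l as [|a l IH]; simpl; intros H; [lra|]. rewrite H; [|now left]. rewrite IH; [lra|]. intros; apply H; now right. Qed.
Lemma lsum_le {A} (l : list A) f g : (forall a, List.In a l -> f a <= g a) -> lsum l f <= lsum l g.
Proof. induction l as [|a l IH]; simpl; intros H; [lra|].
  assert (f a <= g a) by (apply H; now left).
  assert (lsum l f <= lsum l g) by (apply IH; intros; apply H; now right). lra. Qed.
Lemma lsum_nonneg {A} (l : list A) f : (forall a, List.In a l -> 0 <= f a) -> 0 <= lsum l f.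
Proof. intros H. replace 0 with (lsum l (fun _ => 0)). apply lsum_le; auto.
  clear H; induction l; simpl; try rewrite IHl; lra. Qed.
Lemma lsum_scal {A} (l : list A) f c : c * lsum l f = lsum l (fun a => c * f a).
Proof. induction l as [|a l IH]; simpl; [lra| rewrite <- IH; lra]. Qed.
Lemma lsum_plus {A} (l : list A) f g : lsum l (fun a => f a + g a) = lsum l f + lsum l g.
Proof. induction l as [|a l IH]; simpl; [lra| rewrite IH; lra]. Qed.
Lemma lsum_zero {A} (l : list A) : lsum l (fun _ => 0) = 0.
Proof. induction l; simpl; try rewrite IHl; lra. Qed.
Lemma lsum_exchange {A B} (l1 : list A) (l2 : list B) (g : A -> B -> R) :
  lsum l1 (fun a => lsum l2 (g a)) = lsum l2 (fun b => lsum l1 (fun a => g a b)).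
Proof. induction l1 as [|a l IH]; simpl.
  - now rewrite lsum_zero.
  - rewrite IH. rewrite <- lsum_plus. reflexivity. Qed.
Lemma lprod_mult {A} (l : list A) f g : lprod l (fun a => f a * g a) = lprod l f * lprod l g.
Proof. induction l as [|a l IH]; simpl; [lra| rewrite IH; lra]. Qed.
Lemma lprod_nonneg {A} (l : list A) f : (forall a, List.In a l -> 0 <= f a) -> 0 <= lprod l f.
Proof. induction l as [|a l IH]; simpl; intros H; [lra|].
  apply Rmult_le_pos; [apply H; now left| apply IH; intros; apply H; now right]. Qed.
Lemma lprod_pos {A} (l : list A) f : (forall a, List.In a l -> 0 < f a) -> 0 < lprod l f.
Proof. induction l as [|a l IH]; simpl; intros H; [lra|].
  apply Rmult_lt_0_compat; [apply H; now left| apply IH; intros; apply H; now right]. Qed.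
Lemma lprod_le {A} (l : list A) f g : (forall a, List.In a l -> 0 <= f a <= g a) -> lprod l f <= lprod l g.
Proof. induction l as [|a l IH]; simpl; intros H; [lra|].
  assert (H1 : 0 <= f a <= g a) by (apply H; now left).
  assert (H2 : lprod l f <= lprod l g) by (apply IH; intros; apply H; now right).
  assert (H3 : 0 <= lprod l f) by (apply lprod_nonneg; intros; apply H; now right).
  apply Rmult_le_compat; lra. Qed.
Lemma lprod_filter {A} (l : list A) (q : A -> bool) f :
  lprod (List.filter q l) f = lprod l (fun a => if q a then f a else 1).
Proof. induction l as [|a l IH]; simpl; [lra|]. destruct (q a); simpl; rewrite IH; lra. Qed.
Lemma lsum_filter {A} (l : list A) (q : A -> bool) f :
  lsum (List.filter q l) f = lsum l (fun a => if q a then f a else 0).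
Proof. induction l as [|a l IH]; simpl; [lra|]. destruct (q a); simpl; rewrite IH; lra. Qed.
Lemma lprod_one {A} (l : list A) f : (forall a, List.In a l -> f a = 1) -> lprod l f = 1.
Proof. intros H. rewrite (lprod_ext _ _ (fun _ => 1)); auto. clear; induction l; simpl; try rewrite IHl; lra. Qed.
Lemma lsum_cons {A} (a : A) l f : lsum (a :: l) f = f a + lsum l f.
Proof. reflexivity. Qed.
Lemma lprod_cons {A} (a : A) l f : lprod (a :: l) f = f a * lprod l f.
Proof. reflexivity. Qed.
Lemma lsum_nil {A} f : lsum (@nil A) f = 0.
Proof. reflexivity. Qed.
Lemma lprod_nil {A} f : lprod (@nil A) f = 1.
Proof. reflexivity. Qed.


Open Scope R_scope.

Definition Pn (n : nat) : list nat := List.filter prime.prime (List.seq 0 (S n)).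
Definition afac (p : nat) : R := 1 - / (INR p * (INR p - 1)).

Lemma A_partial_eq n : A_partial n = lprod (Pn n) afac.
Proof. reflexivity. Qed.

Lemma Pn_S n : Pn (S n) = Pn n ++ (if prime.prime (S n) then (S n :: nil) else nil).
Proof. unfold Pn. rewrite (List.seq_S (S n) 0) List.filter_app. simpl. 
  destruct (prime.prime (S n)); reflexivity. Qed.

Lemma In_Pn p n : List.In p (Pn n) <-> prime.prime p /\ (p <= n)%coq_nat.
Proof. unfold Pn. rewrite List.filter_In List.in_seq. split; intros [H1 H2]; split; auto; lia. Qed.

Lemma prime_ge2 p : prime.prime p -> (2 <= p)%coq_nat.
Proof. intros H. have := prime_gt1 H. move/ltP. lia. Qed.

Lemma afac_bounds p : (2 <= p)%coq_nat -> 1/2 <= afac p <= 1.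
Proof. intros H. unfold afac. apply le_INR in H. simpl in H.
  assert (HH: 2 <= INR p * (INR p - 1)) by nra.
  split.
  - assert (/ (INR p * (INR p - 1)) <= /2) by (apply Rinv_le_contravar; lra). lra.
  - assert (0 < / (INR p * (INR p - 1))) by (apply Rinv_0_lt_compat; lra). lra.
Qed.

Lemma A_partial_S n : A_partial (S n) = A_partial n * (if prime.prime (S n) then afac (S n) else 1).
Proof. rewrite !A_partial_eq Pn_S lprod_cat. destruct (prime.prime (S n)); simpl; lra. Qed.

Lemma A_partial_nonneg n : 0 <= A_partial n.
Proof. rewrite A_partial_eq. apply lprod_nonneg. intros p Hp. apply In_Pn in Hp as [Hp _].
  have := afac_bounds p (prime_ge2 p Hp). lra. Qed.

Lemma A_partial_decr n : A_partial (S n) <= A_partial n.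
Proof. rewrite A_partial_S. have := A_partial_nonneg n. destruct (prime.prime (S n)) eqn:E.
  - have := afac_bounds (S n) (prime_ge2 _ E). nra.
  - lra. Qed.

Lemma A_partial_lower n : (2 <= n)%coq_nat -> (1/2) * (1/2 + / INR n) <= A_partial n.
Proof. induction n as [|n IH]; intros Hn; [lia|].
  destruct (Nat.eq_dec n 1) as [->|Hn1].
  - rewrite (A_partial_S 1). change (A_partial 1) with 1. simpl.
    unfold afac. simpl. lra.
  - assert (H2 : (2 <= n)%coq_nat) by lia. specialize (IH H2).
    rewrite A_partial_S. rewrite S_INR.
    assert (Hn': 2 <= INR n) by (apply le_INR in H2; simpl in H2; lra).
    assert (Hi: / (INR n + 1) <= / INR n) by (apply Rinv_le_contravar; lra).
    destruct (prime.prime (S n)).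
    + unfold afac. rewrite S_INR.
      replace (INR n + 1 - 1) with (INR n) by lra.
      assert (E1: / INR n = 1 / INR n) by (field; lra).
      assert (E2: / (INR n + 1) = 1 / (INR n + 1)) by (field; lra).
      assert (E3: / ((INR n + 1) * INR n) = 1/ ((INR n + 1) * INR n)) by (field; lra).
      rewrite E1 in IH. rewrite E2 E3.
      set (u := INR n) in *.
      assert (Hb : 1/2 * (1/2 + 1/(u+1)) <= 1/2 * (1/2 + 1/u) * (1 - 1/((u+1)*u))).
      { apply Rmult_le_reg_r with (r := u * (u+1) * 2 * ((u+1)*u)). 
        assert (0 < u) by lra. repeat apply Rmult_lt_0_compat; lra.
        field_simplify; try lra. nra. }
      assert (0 <= 1 - 1 / ((u + 1) * u)).
      { assert (1 / ((u+1)*u) <= 1/2). { apply Rmult_le_reg_r with ((u+1)*u). nra.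
        field_simplify; nra. } lra. }
      nra.
    + assert (/ INR n <= / INR n) by lra. lra.
Qed.

Lemma A_partial_ge n : 1/4 <= A_partial n.
Proof. destruct (le_lt_dec 2 n) as [H|H].
  - have := A_partial_lower n H. assert (0 < / INR n).
    { apply Rinv_0_lt_compat. apply lt_0_INR. lia. } lra.
  - destruct n as [|[|n]]; try lia; change (A_partial 0) with 1 || change (A_partial 1) with 1; lra.
Qed.

Lemma A_lim : is_lim_seq A_partial A.
Proof.
  have Hex : ex_finite_lim_seq A_partial.
  { apply ex_finite_lim_seq_decr with (M := 1/4). apply A_partial_decr. apply A_partial_ge. }
  destruct Hex as [l Hl]. unfold A. rewrite (is_lim_seq_unique _ _ Hl). exact Hl.
Qed.

Lemma A_le n : A <= A_partial n.
Proof. apply is_lim_seq_decr_compare. apply A_lim. apply A_partial_decr. Qed.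

Lemma A_ge : 1/4 <= A.
Proof. have := is_lim_seq_le (fun _ => 1/4) A_partial (1/4) A. simpl. intros H. apply H.
  apply A_partial_ge. apply is_lim_seq_const. apply A_lim. Qed.


Open Scope R_scope.

Definition cfac (p : nat) : R := (INR p ^ 2 - 1) / (INR p ^ 2 - INR p - 1).
Definition efac (p : nat) : R := if (p <= 7)%N then cfac p else 1 + / INR p.
Definition A7 : R := A_partial 7.
Definition Bt (t : nat) : R := A7 * lprod (primes t) efac.

Lemma r_eq t : r t = / (INR t ^ 2) * lprod (primes t) cfac.
Proof. reflexivity. Qed.

Lemma filterE {T} (f : T -> bool) (l : list T) : List.filter f l = filter f l.
Proof. induction l as [|a l IH]; simpl; [done|]. destruct (f a); by rewrite IH. Qed.
Lemma seqE s n : List.seq s n = iota s n.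
Proof. revert s; induction n as [|n IH]; intros s; simpl; [done|]. by rewrite IH. Qed.

Lemma Pn_split t : Pn (t + 7) = Pn 7 ++ List.filter prime.prime (List.seq 8 t).
Proof. unfold Pn. replace (S (t+7)) with (8 + t)%coq_nat by lia.
  rewrite List.seq_app List.filter_app. reflexivity. Qed.

Lemma primes_filter t : (1 <= t)%N -> forall n, (t <= n)%N ->
  primes t = List.filter (fun p => p %| t) (Pn n).
Proof. intros Ht n Hn. unfold Pn. rewrite !filterE seqE.
  apply: (irr_sorted_eq ltn_trans ltnn).
  - apply sorted_primes.
  - apply: sorted_filter; first exact: ltn_trans.
    apply: sorted_filter; first exact: ltn_trans. apply iota_ltn_sorted.
  - intros p. rewrite mem_primes !mem_filter mem_iota add0n.
    case Hp: (prime p); case Hd: (p %| t); rewrite ?andbF ?andbT ?andbF //=; simpl.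
    rewrite Ht. simpl. symmetry. apply: (leq_ltn_trans (dvdn_leq Ht Hd)). by rewrite ltnS.
Qed.

Lemma cfac_pos p : (2 <= p)%coq_nat -> 0 < cfac p.
Proof. intros H. apply le_INR in H. simpl in H. unfold cfac.
  apply Rdiv_lt_0_compat; nra. Qed.

Lemma afac_cfac p : (2 <= p)%coq_nat -> afac p * cfac p = 1 + / INR p.
Proof. intros H. apply le_INR in H. simpl in H. unfold afac, cfac.
  field. split; [nra|]. split; nra. Qed.

Lemma efac_ge1 p : (2 <= p)%coq_nat -> 1 <= efac p.
Proof. intros H. unfold efac. have H' := le_INR _ _ H. simpl in H'.
  destruct (p <= 7)%N.
  - unfold cfac. apply Rcomplements.Rle_div_r. nra. nra.
  - assert (0 < / INR p) by (apply Rinv_0_lt_compat; lra). lra.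
Qed.

Lemma In_mem (T : eqType) (x : T) (s : seq T) : List.In x s -> x \in s.
Proof. elim: s => [|a s IH] //= [->|H]; rewrite in_cons ?eqxx //. by rewrite IH ?orbT. Qed.

Lemma In_primes p t : List.In p (primes t) -> prime p.
Proof. move/In_mem. rewrite mem_primes. by case/andP. Qed.

Lemma pointwise t : (1 <= t)%N -> A * r t <= Bt t / INR t ^ 2.
Proof. intros Ht.
  set q := fun p => p %| t.
  assert (Hpr := primes_filter t Ht (t + 7) (leq_addr 7 t)).
  assert (Ht' : 0 < INR t) by (apply lt_0_INR; move/leP: Ht; lia).
  have HA := A_le (t + 7).
  assert (Hr0 : 0 <= lprod (primes t) cfac).
  { apply lprod_nonneg. intros p Hp. apply Rlt_le, cfac_pos, prime_ge2.
    exact: In_primes Hp. }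
  rewrite r_eq. unfold Bt.
  apply Rle_trans with (A_partial (t+7) * (/ INR t ^ 2 * lprod (primes t) cfac)).
  { apply Rmult_le_compat_r; [|exact HA]. apply Rmult_le_pos; [|exact Hr0].
    apply Rlt_le, Rinv_0_lt_compat, pow_lt, Ht'. }
  assert (Key : A_partial (t+7) * lprod (primes t) cfac <= A7 * lprod (primes t) efac).
  { rewrite A_partial_eq Hpr !(lprod_filter (Pn (t+7))) -lprod_mult Pn_split !lprod_cat.
    unfold A7. rewrite A_partial_eq. 
    set L7 := Pn 7. set R8 := List.filter prime.prime (List.seq 8 t).
    rewrite (lprod_ext L7 (fun a => afac a * (if q a then cfac a else 1))
                          (fun a => afac a * (if q a then efac a else 1))).
    2:{ intros p Hp. apply In_Pn in Hp as [_ Hp]. unfold efac.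
        have -> : (p <= 7)%N by apply/leP. reflexivity. }
    rewrite lprod_mult.
    assert (HR : lprod R8 (fun a => afac a * (if q a then cfac a else 1))
                  <= lprod R8 (fun a => if q a then efac a else 1)).
    { apply lprod_le. intros p Hp. unfold R8 in Hp.
      apply List.filter_In in Hp as [Hp1 Hp2]. apply List.in_seq in Hp1.
      have H2 : (2 <= p)%coq_nat by lia.
      have := afac_bounds p H2. have := cfac_pos p H2. intros.
      destruct (q p).
      - rewrite afac_cfac //. unfold efac.
        have -> : (p <= 7)%N = false by apply/negbTE; rewrite -ltnNge; apply/ltP; lia.
        assert (0 < / INR p) by (apply Rinv_0_lt_compat, lt_0_INR; lia). lra.
      - lra. }
    assert (0 <= lprod L7 afac * lprod L7 (fun a => if q a then efac a else 1)).
    { apply Rmult_le_pos; apply lprod_nonneg; intros p Hp; apply In_Pn in Hp as [Hp _];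
      have H2 := prime_ge2 p Hp.
      - have := afac_bounds p H2; lra.
      - destruct (q p); [have := efac_ge1 p H2|]; lra. }
    assert (0 <= lprod R8 (fun a => afac a * (if q a then cfac a else 1))).
    { apply lprod_nonneg. intros p Hp. apply List.filter_In in Hp as [_ Hp].
      have H2 := prime_ge2 p Hp. have := afac_bounds p H2. have := cfac_pos p H2.
      destruct (q p); nra. }
    unfold q in *. rewrite -Rmult_assoc. apply Rmult_le_compat_l; assumption. }
  assert (0 < / INR t ^ 2) by (apply Rinv_0_lt_compat, pow_lt, Ht').
  unfold Rdiv. nra.
Qed.


Open Scope R_scope.

Definition rr (p : nat) : R := efac p - 1.
Definition mfac (p : nat) : R := if (p <= 7)%N then INR p * rr p else 1.

Fixpoint subs (L : list nat) : list (R * nat) :=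
  match L with
  | nil => (1, 1%nat) :: nil
  | p :: L' => subs L' ++ List.map (fun x => (rr p * fst x, (p * snd x)%nat)) (subs L')
  end.

Definition allprime (L : list nat) := forall p, List.In p L -> prime p.

Lemma allprime_cons p L : allprime (p :: L) -> prime p /\ allprime L.
Proof. intros H. split; [apply H; now left| intros q Hq; apply H; now right]. Qed.

Lemma rr_nonneg p : prime p -> 0 <= rr p.
Proof. intros H. unfold rr. have := efac_ge1 p (prime_ge2 p H). lra. Qed.


Lemma subs_pos L : allprime L -> forall x, List.In x (subs L) -> 0 <= fst x /\ (0 < snd x)%N.
Proof. induction L as [|p L IH]; simpl; intros HL x Hx.
  - destruct Hx as [<-|[]]. simpl. split; [lra| done].
  - apply allprime_cons in HL as [Hp HL]. apply List.in_app_or in Hx as [Hx|Hx]; [now apply IH|].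
    apply List.in_map_iff in Hx as [y [<- Hy]]. destruct (IH HL y Hy) as [H1 H2]. simpl.
    split; [apply Rmult_le_pos; [apply rr_nonneg|]; auto|]. rewrite muln_gt0 H2 andbT. exact: prime_gt0.
Qed.

Lemma subs_coprime L : allprime L -> forall p, prime p -> ~ List.In p L ->
  forall x, List.In x (subs L) -> coprime p (snd x).
Proof. induction L as [|q L IH]; simpl; intros HL p Hp HpL x Hx.
  - destruct Hx as [<-|[]]. simpl. exact: coprimen1.
  - apply allprime_cons in HL as [Hq HL]. apply List.in_app_or in Hx as [Hx|Hx].
    + apply IH; auto.
    + apply List.in_map_iff in Hx as [y [<- Hy]]. simpl. rewrite coprimeMr. apply/andP; split.
      * rewrite prime_coprime // dvdn_prime2 //. apply/eqP => E. apply HpL. left. by rewrite E.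
      * apply IH; auto.
Qed.

Lemma subs_dvd L t : allprime L -> NoDup L ->
  lprod L (fun p => if p %| t then efac p else 1)
  <= lsum (subs L) (fun x => if snd x %| t then fst x else 0).
Proof. induction L as [|p L IH]; simpl; intros HL ND.
  - rewrite dvd1n. lra.
  - apply allprime_cons in HL as [Hp HL']. inversion ND as [|? ? HnIn ND']; subst.
    rewrite lsum_cat lsum_map. simpl.
    have IH' := IH HL' ND'.
    have H0 : 0 <= lsum (subs L) (fun x => if snd x %| t then fst x else 0).
    { apply lsum_nonneg. intros x Hx. have := subs_pos L HL' x Hx. destruct (snd x %| t); lra. }
    have H1 : 0 <= lsum (subs L) (fun a => if p * snd a %| t then rr p * fst a else 0).
    { apply lsum_nonneg. intros x Hx. have := subs_pos L HL' x Hx. have := rr_nonneg p Hp.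
      destruct (p * snd x %| t); nra. }
    have H2 : 0 <= lprod L (fun p0 => if p0 %| t then efac p0 else 1).
    { apply lprod_nonneg. intros q Hq. have := efac_ge1 q (prime_ge2 q (HL' q Hq)).
      destruct (q %| t); lra. }
    destruct (p %| t) eqn:Hpt.
    + replace (efac p) with (1 + rr p) by (unfold rr; ring).
      have H3 : rr p * lsum (subs L) (fun x => if snd x %| t then fst x else 0)
                <= lsum (subs L) (fun a => if p * snd a %| t then rr p * fst a else 0).
      { rewrite lsum_scal. apply lsum_le. intros x Hx. have [Hf _] := subs_pos L HL' x Hx.
        have Hc := subs_coprime L HL' p Hp HnIn x Hx. have Hr := rr_nonneg p Hp.
        cbv beta. destruct (snd x %| t) eqn:Hd.
        - have -> : (p * snd x %| t) by rewrite Gauss_dvd // Hpt Hd. lra.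
        - destruct (p * snd x %| t); nra. }
      have := rr_nonneg p Hp. nra.
    + nra.
Qed.

Lemma subs_euler L : allprime L ->
  lsum (subs L) (fun x => fst x / INR (snd x)) = lprod L (fun p => 1 + rr p / INR p).
Proof. induction L as [|p L IH]; simpl; intros HL.
  - lra.
  - apply allprime_cons in HL as [Hp HL']. rewrite lsum_cat lsum_map IH //. simpl.
    have Hp0 : 0 < INR p by apply lt_0_INR; have := prime_gt0 Hp; move/ltP.
    rewrite (lsum_ext _ _ (fun a => rr p / INR p * (fst a / INR (snd a)))).
    + rewrite -lsum_scal IH //. ring.
    + intros x Hx. have [_ Hd] := subs_pos L HL' x Hx. rewrite mult_INR.
      have : 0 < INR (snd x) by apply lt_0_INR; move/ltP: Hd. intros. field. lra.
Qed.

Lemma mfac_bounds p : prime p -> 1 <= mfac p /\ 0 <= INR p * rr p <= mfac p.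
Proof. intros Hp. have H2 := prime_ge2 p Hp. have HI := le_INR _ _ H2. simpl in HI.
  unfold mfac, rr, efac. destruct (p <= 7)%N.
  - unfold cfac. replace ((INR p ^ 2 - 1) / (INR p ^ 2 - INR p - 1) - 1)
      with (INR p / (INR p ^ 2 - INR p - 1)) by (field; nra).
    replace (INR p * (INR p / (INR p ^ 2 - INR p - 1))) with (INR p ^ 2 / (INR p ^ 2 - INR p - 1)) by (field; nra).
    split; [apply Rcomplements.Rle_div_r; nra|]. split; [|lra]. apply Rcomplements.Rdiv_le_0_compat; nra.
  - replace (INR p * (1 + / INR p - 1)) with 1 by (field; lra). lra.
Qed.

Lemma subs_weight L : allprime L -> forall x, List.In x (subs L) -> fst x * INR (snd x) <= lprod L mfac.
Proof. induction L as [|p L IH]; simpl; intros HL x Hx.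
  - destruct Hx as [<-|[]]. simpl. lra.
  - apply allprime_cons in HL as [Hp HL']. have [Hm1 Hm2] := mfac_bounds p Hp.
    have Hnn : 0 <= lprod L mfac by apply lprod_nonneg; intros q Hq; have := mfac_bounds q (HL' q Hq); lra.
    apply List.in_app_or in Hx as [Hx|Hx].
    + have := IH HL' x Hx. nra.
    + apply List.in_map_iff in Hx as [y [<- Hy]]. simpl. rewrite mult_INR.
      have := IH HL' y Hy. have [Hy1 Hy2] := subs_pos L HL' y Hy.
      have : 0 <= INR (snd y) by apply pos_INR.
      intros. replace (rr p * fst y * (INR p * INR (snd y))) with ((INR p * rr p) * (fst y * INR (snd y))) by ring.
      apply Rmult_le_compat; nra.
Qed.

Lemma subs_nodup L : allprime L -> NoDup L -> NoDup (List.map snd (subs L)).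
Proof. induction L as [|p L IH]; simpl; intros HL ND.
  - constructor; [auto| constructor].
  - apply allprime_cons in HL as [Hp HL']. inversion ND as [|? ? HnIn ND']; subst.
    rewrite List.map_app List.map_map. simpl. apply List.NoDup_app.
    + now apply IH.
    + rewrite <- (List.map_map snd (fun d => (p * d)%nat)). apply List.NoDup_map_NoDup_ForallPairs; [|now apply IH].
      intros a b _ _ E. have := prime_gt0 Hp. move/ltP => ?. apply (Nat.mul_cancel_l a b p); [lia| exact E].
    + intros d Hd1 Hd2. apply List.in_map_iff in Hd1 as [x [<- Hx]].
      apply List.in_map_iff in Hd2 as [y [E Hy]].
      have Hc := subs_coprime L HL' p Hp HnIn x Hx.
      move: Hc. rewrite prime_coprime // -E /=. by rewrite dvdn_mulr.
Qed.

Definition natprod (L : list nat) : nat := fold_right muln 1%nat L.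

Lemma subs_divides L : forall x, List.In x (subs L) -> (snd x %| natprod L).
Proof. induction L as [|p L IH]; simpl; intros x Hx.
  - destruct Hx as [<-|[]]. done.
  - apply List.in_app_or in Hx as [Hx|Hx].
    + apply: dvdn_trans (IH x Hx) _. exact: dvdn_mull.
    + apply List.in_map_iff in Hx as [y [<- Hy]]. simpl. apply: dvdn_mul (dvdnn p) (IH y Hy).
Qed.


Open Scope R_scope.

Definition Pd (d : nat) (y : R) : R := 2 / (INR d * (2 * y - INR d)).

Lemma Pd_nonneg d y : 1 <= INR d -> INR d <= y -> 0 <= Pd d y.
Proof. intros. unfold Pd. apply Rcomplements.Rdiv_le_0_compat; [lra|]. nra. Qed.

Lemma Pd_anti d y1 y2 : 1 <= INR d -> INR d <= y1 -> y1 <= y2 -> Pd d y2 <= Pd d y1.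
Proof. intros. unfold Pd. unfold Rdiv. apply Rmult_le_compat_l; [lra|].
  apply Rinv_le_contravar; nra. Qed.

Lemma Pd_step d y : 1 <= INR d -> INR d <= y -> / (y ^ 2) <= Pd d y - Pd d (y + INR d).
Proof. intros. unfold Pd.
  replace (2 / (INR d * (2 * y - INR d)) - 2 / (INR d * (2 * (y + INR d) - INR d)))
    with (4 / ((2 * y - INR d) * (2 * y + INR d))) by (field; nra).
  replace (/ y ^ 2) with (4 / (4 * y ^ 2)) by (field; nra).
  unfold Rdiv. apply Rmult_le_compat_l; [lra|]. apply Rinv_le_contravar; nra. Qed.

Definition fd (M d : nat) (t : nat) : R := if (M <= t)%N && (d %| t) then / (INR t ^ 2) else 0.

Lemma per_d_inv d M K : (1 <= d)%N -> (1 <= M)%N ->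
  lsum (List.seq 0 (S K)) (fd M d)
  <= Pd d (Rmax (INR M) (INR d)) - Pd d (Rmax (INR (d * (K %/ d) + d)) (Rmax (INR M) (INR d))).
Proof. intros Hd HM. set L := Rmax (INR M) (INR d).
  have HdR : 1 <= INR d by (apply (le_INR 1); lia).
  have HL1 : INR d <= L by apply Rmax_r.
  have HL2 : INR M <= L by apply Rmax_l.
  induction K as [|K IH].
  - simpl. unfold fd. have -> : (M <= 0)%N = false by lia. simpl.
    rewrite div0n muln0 add0n. rewrite (Rmax_right _ L); [lra|]. exact HL1.
  - rewrite (List.seq_S (S K) 0) lsum_app.
    have -> : lsum ((0 + S K)%coq_nat :: nil) (fd M d) = fd M d (S K) by simpl; lra.
    have Hdiv := divnS K Hd.
    have -> : fd M d (S K) = if (M <= K.+1)%N && (d %| K.+1) then / (INR K.+1 ^ 2) else 0 by reflexivity.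
    destruct (d %| K.+1) eqn:Hdt.
    + have E1 : (d * (K %/ d) + d = K.+1)%N.
      { have := divnK Hdt. rewrite Hdiv /=. lia. }
      have E2 : (d * (K.+1 %/ d) + d = K.+1 + d)%N by rewrite Hdiv /=; lia.
      rewrite E1 in IH. rewrite E2.
      have H0 := dvdn_leq (ltn0Sn K) Hdt.
      have Ht : INR d <= INR K.+1 by apply le_INR; apply/leP.
      destruct (M <= K.+1)%N eqn:HM'.
      * have -> : (if true && true then / INR K.+1 ^ 2 else 0) = / INR K.+1 ^ 2 by [].
        have HtL : L <= INR K.+1.
        { unfold L. apply Rmax_lub; [apply le_INR; lia|exact Ht]. }
        rewrite (Rmax_left (INR K.+1) L) in IH; [|exact HtL].
        rewrite plus_INR. rewrite (Rmax_left _ L); [|have := pos_INR d; lra].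
        have := Pd_step d (INR K.+1) HdR Ht. lra.
      * have -> : (if false && true then / INR K.+1 ^ 2 else 0) = 0 by [].
        rewrite (Rmax_right (INR K.+1) L) in IH.
        2:{ have : (K.+1 < M)%N by lia. move/ltP/lt_INR. lra. }
        have : Pd d (Rmax (INR (K.+1 + d)) L) <= Pd d L.
        { apply Pd_anti; auto. apply Rmax_r. }
        lra.
    + have -> : (if (M <= K.+1)%N && false then / INR K.+1 ^ 2 else 0) = 0 by rewrite andbF.
      have -> : (K.+1 %/ d = K %/ d)%N by rewrite Hdiv. lra.
Qed.

Lemma per_d d M K : (1 <= d)%N -> (1 <= M)%N ->
  lsum (List.seq 0 (S K)) (fd M d) <= Pd d (Rmax (INR M) (INR d)).
Proof. intros Hd HM. have := per_d_inv d M K Hd HM.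
  have HdR : 1 <= INR d by (apply (le_INR 1); lia).
  have : 0 <= Pd d (Rmax (INR (d * (K %/ d) + d)) (Rmax (INR M) (INR d))).
  { apply Pd_nonneg; auto. apply Rle_trans with (Rmax (INR M) (INR d)); apply Rmax_r. }
  lra. Qed.


Open Scope R_scope.

Lemma lsum_split {A} (l : list A) (q : A -> bool) f :
  lsum l f = lsum (List.filter q l) f + lsum (List.filter (fun a => negb (q a)) l) f.
Proof. rewrite !lsum_filter -lsum_plus. apply lsum_ext. intros a _. destruct (q a); simpl; lra. Qed.

Lemma lsum_single (s : list nat) v (phi : nat -> R) : NoDup s -> 0 <= phi v ->
  lsum (List.filter (fun d => Nat.eqb d v) s) phi <= phi v.
Proof. induction s as [|a s IH]; simpl; intros ND H0; [lra|].
  inversion ND as [|? ? Hn ND']; subst.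
  destruct (Nat.eqb a v) eqn:E.
  - apply Nat.eqb_eq in E; subst. simpl.
    rewrite (lsum_ext _ _ (fun _ => 0)).
    + rewrite lsum_zero. lra.
    + intros b Hb. apply List.filter_In in Hb as [Hb1 Hb2]. apply Nat.eqb_eq in Hb2. subst. contradiction.
  - now apply IH.
Qed.

Lemma nodup_sum (phi : nat -> R) D : forall s : list nat, NoDup s ->
  (forall d, List.In d s -> (1 <= d)%coq_nat /\ (d <= D)%coq_nat) -> (forall d, (1 <= d)%coq_nat -> 0 <= phi d) ->
  lsum s phi <= lsum (List.seq 1 D) phi.
Proof. induction D as [|D IH]; intros s ND Hs H0.
  - destruct s as [|a s]; [simpl; lra|]. exfalso. have := Hs a (List.in_eq a s). lia.
  - rewrite (lsum_split s (fun d => Nat.eqb d (S D))).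
    rewrite (List.seq_S D 1) lsum_app. simpl.
    have H1 := lsum_single s (S D) phi ND (H0 _ (le_n_S _ _ (Nat.le_0_l D))).
    have H2 : lsum (List.filter (fun a => negb (Nat.eqb a (S D))) s) phi <= lsum (List.seq 1 D) phi.
    { apply IH; auto. apply List.NoDup_filter, ND. intros d Hd. apply List.filter_In in Hd as [Hd1 Hd2].
      apply Bool.negb_true_iff, Nat.eqb_neq in Hd2. have := Hs d Hd1. lia. }
    replace (1 + D)%coq_nat with (S D) by lia. lra.
Qed.

Definition H (M : nat) : R := lsum (List.seq 1 M) (fun d => / INR d).
Definition phi (M d : nat) : R := if (d <= M)%N then / (INR M * INR d) else 2 * INR M / INR d ^ 3.

Lemma phi_nonneg M d : (1 <= M)%coq_nat -> (1 <= d)%coq_nat -> 0 <= phi M d.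
Proof. intros HM Hd. unfold phi. have Hd' : 0 < INR d by apply lt_0_INR; lia.
  have HM' : 0 < INR M by apply lt_0_INR; lia.
  destruct (d <= M)%N.
  - apply Rlt_le, Rinv_0_lt_compat. nra.
  - apply Rcomplements.Rdiv_le_0_compat. lra. apply pow_lt. lra.
Qed.

Definition G (M D : nat) : R := lsum (List.seq (S D) (M - D)) (fun d => / (INR M * INR d)).
Definition Rpot (M D : nat) : R :=
  if (D <= M)%N then G M D + 2 / (INR M + 1) else 2 * INR M / ((INR M + 1) * INR D).

Lemma Rpot_nonneg M D : (1 <= M)%coq_nat -> 0 <= Rpot M D.
Proof. intros HM. have HM' : 0 < INR M by apply lt_0_INR; lia. unfold Rpot.
  destruct (D <= M)%N eqn:E.
  - have : 0 <= G M D.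
    { apply lsum_nonneg. intros d Hd. apply List.in_seq in Hd.
      have : 0 < INR d by apply lt_0_INR; lia. intros. apply Rlt_le, Rinv_0_lt_compat. nra. }
    have : 0 < 2 / (INR M + 1) by apply Rdiv_lt_0_compat; lra. lra.
  - have : 0 < INR D by apply lt_0_INR; lia. intros.
    apply Rlt_le, Rdiv_lt_0_compat; nra.
Qed.

Lemma phi_pot M D : (1 <= M)%coq_nat ->
  lsum (List.seq 1 D) (phi M) + Rpot M D <= H M / INR M + 2 / (INR M + 1).
Proof. intros HM. have HM' : 0 < INR M by apply lt_0_INR; lia.
  induction D as [|D IH].
  - simpl. unfold Rpot. have -> : (0 <= M)%N by []. unfold G, H. rewrite subn0.
    rewrite (lsum_ext _ _ (fun d => / INR M * / INR d)).
    + rewrite -lsum_scal. unfold Rdiv. lra.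
    + intros d Hd. apply List.in_seq in Hd. rewrite Rinv_mult. reflexivity.
  - rewrite (List.seq_S D 1) lsum_app. simpl. replace (1 + D)%coq_nat with (S D) by lia.
    unfold Rpot in *. have HD : 0 < INR (S D) by apply lt_0_INR; lia.
    destruct (S D <= M)%N eqn:E.
    + have E3 : (D <= M)%N by lia. rewrite E3 in IH.
      have EG : G M D = / (INR M * INR (S D)) + G M (S D).
      { unfold G. have -> : (M - D = (M - D.+1).+1)%N by lia. simpl. reflexivity. }
      unfold phi at 2. rewrite E. rewrite EG in IH. lra.
    + unfold phi at 2. rewrite E.
      have HDM : (M <= D)%coq_nat by lia.
      have HDR : INR M <= INR D by apply le_INR.
      have HDpos : 0 < INR D by lra.
      have Hb : 2 * INR M / INR (S D) ^ 3 + 2 * INR M / ((INR M + 1) * INR (S D))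
                <= 2 * INR M / ((INR M + 1) * INR D).
      { rewrite S_INR. rewrite S_INR in HD.
        have Hc : 2 * INR M / (INR D + 1) ^ 3 <= 2 * INR M / ((INR M + 1) * INR D) - 2 * INR M / ((INR M + 1) * (INR D + 1)).
        { replace (2 * INR M / ((INR M + 1) * INR D) - 2 * INR M / ((INR M + 1) * (INR D + 1)))
            with (2 * INR M / ((INR M + 1) * INR D * (INR D + 1))) by (field; lra).
          unfold Rdiv. apply Rmult_le_compat_l; [lra|]. apply Rinv_le_contravar; [nra|].
          simpl. nra. }
        lra. }
      destruct (D <= M)%N eqn:E2.
      * have EDM : D = M by lia. subst D.
        have EG0 : G M M = 0 by unfold G; rewrite subnn; reflexivity.
        rewrite EG0 in IH.
        replace (0 + 2 / (INR M + 1)) with (2 * INR M / ((INR M + 1) * INR M)) in IH by (field; lra).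
        lra.
      * lra.
Qed.

Lemma phi_sum M D : (1 <= M)%coq_nat -> lsum (List.seq 1 D) (phi M) <= (H M + 2) / INR M.
Proof. intros HM. have := phi_pot M D HM. have := Rpot_nonneg M D HM.
  have HM' : 0 < INR M by apply lt_0_INR; lia.
  have : 2 / (INR M + 1) <= 2 / INR M.
  { unfold Rdiv. apply Rmult_le_compat_l; [lra|]. apply Rinv_le_contravar; lra. }
  intros. replace ((H M + 2) / INR M) with (H M / INR M + 2 / INR M) by (field; lra). lra.
Qed.

Lemma H_cmp M0 k : (1 <= M0)%coq_nat -> H (M0 + k) <= H M0 + INR k / INR M0.
Proof. intros HM. have HM' : 0 < INR M0 by apply lt_0_INR; lia. induction k as [|k IH].
  - rewrite addn0. simpl. unfold Rdiv. lra.
  - unfold H in *. rewrite addnS (List.seq_S (M0 + k) 1) lsum_app.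
    change (lsum ((1 + (M0 + k))%coq_nat :: nil) (fun d => / INR d)) with (/ INR (1 + (M0 + k)) + 0).
    rewrite S_INR.
    have : / INR (1 + (M0 + k)) <= / INR M0.
    { apply Rinv_le_contravar; [lra|]. apply le_INR. lia. }
    intros. unfold Rdiv in *. lra.
Qed.

Lemma Hratio M0 M : (1 <= M0)%coq_nat -> (M0 <= M)%coq_nat -> (H M + 2) / INR M <= (H M0 + 2) / INR M0.
Proof. intros H1 H2. have HM' : 0 < INR M0 by apply lt_0_INR; lia.
  have HMM : INR M0 <= INR M by apply le_INR.
  have Hc0 := H_cmp M0 (M - M0) H1.
  have EM : (M0 + (M - M0))%N = M by lia.
  rewrite EM in Hc0.
  have Ek : INR (M - M0)%N = INR M - INR M0 by rewrite -minus_INR //.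
  rewrite Ek in Hc0.
  have H0 : 0 <= H M0.
  { apply lsum_nonneg. intros d Hd. apply List.in_seq in Hd. apply Rlt_le, Rinv_0_lt_compat, lt_0_INR. lia. }
  set u := INR M / INR M0.
  have Hc : H M <= H M0 + (u - 1) by (unfold u; replace (INR M / INR M0 - 1) with ((INR M - INR M0) / INR M0) by (field; lra); exact Hc0).
  have Hu : 1 <= u by apply Rcomplements.Rle_div_r; lra.
  have EMu : INR M = u * INR M0 by (unfold u; field; lra).
  rewrite EMu. apply Rcomplements.Rle_div_l; [nra|].
  replace ((H M0 + 2) / INR M0 * (u * INR M0)) with ((H M0 + 2) * u) by (field; lra).
  have := Rmult_le_pos (H M0) (u - 1) H0 ltac:(lra). nra.
Qed.


Open Scope R_scope.

Lemma Pn7 : Pn 7 = 2%nat :: 3%nat :: 5%nat :: 7%nat :: nil.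
Proof. vm_compute. reflexivity. Qed.

Lemma A7_val : A7 = 779 / 2016.
Proof. unfold A7. rewrite A_partial_eq Pn7. unfold lprod, afac. simpl. field. Qed.

Lemma Wc7 : lprod (Pn 7) mfac = 44100 / 3895.
Proof. rewrite Pn7. unfold lprod, mfac, rr, efac, cfac. simpl. field. Qed.

Lemma E7 : lprod (Pn 7) (fun p => 1 + rr p / INR p) = 2016 / 779.
Proof. rewrite Pn7. unfold lprod, rr, efac, cfac. simpl. field. Qed.

Lemma prod_le_inv (l : list nat) (u : nat -> R) : (forall n, List.In n l -> 0 <= u n) ->
  lsum l u < 1 -> lprod l (fun n => 1 + u n) <= / (1 - lsum l u).
Proof. induction l as [|a l IH]; intros Hu Hs; rewrite ?lsum_nil ?lprod_nil ?lsum_cons ?lprod_cons in Hs |- *.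
  - rewrite Rminus_0_r Rinv_1. lra.
  - have Ha : 0 <= u a by apply Hu; left.
    have Hl : 0 <= lsum l u by apply lsum_nonneg; intros; apply Hu; right.
    have IH' := IH (fun n Hn => Hu n (or_intror Hn)) ltac:(lra).
    apply Rle_trans with ((1 + u a) * / (1 - lsum l u)).
    + apply Rmult_le_compat_l; lra.
    + set S := lsum l u in Hs Hl IH' *. set v := u a in Hs Ha *.
      replace ((1 + v) * / (1 - S)) with ((1 + v) * (1 - v - S) * / ((1 - S) * (1 - v - S))) by (field; repeat split; lra).
      replace (/ (1 - (v + S))) with ((1 - S) * / ((1 - S) * (1 - v - S))) by (field; repeat split; lra).
      apply Rmult_le_compat_r; [apply Rlt_le, Rinv_0_lt_compat; nra| nra].
Qed.

Lemma sum_inv_sq a K : (2 <= a)%coq_nat ->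
  lsum (List.seq a K) (fun n => / INR n ^ 2) <= / (INR a - 1) - / (INR a - 1 + INR K).
Proof. revert a. induction K as [|K IH]; intros a Ha.
  - simpl. rewrite Rplus_0_r. lra.
  - change (List.seq a (S K)) with (a :: List.seq (S a) K). rewrite lsum_cons. have Ha' := le_INR _ _ Ha. simpl in Ha'.
    have := IH (S a) ltac:(lia). rewrite S_INR S_INR.
    replace (INR a + 1 - 1) with (INR a) by ring. intros H1.
    have : / INR a ^ 2 <= / (INR a - 1) - / INR a.
    { replace (/ (INR a - 1) - / INR a) with (/ (INR a * (INR a - 1))) by (field; repeat split; lra).
      apply Rinv_le_contravar; nra. }
    replace (INR a - 1 + (INR K + 1)) with (INR a + INR K) by ring. have := pos_INR K. intros.
    lra.
Qed.

Lemma rest_euler K : lprod (List.filter prime.prime (List.seq 8 K)) (fun p => 1 + rr p / INR p) <= 7 / 6.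
Proof.
  rewrite lprod_filter.
  apply Rle_trans with (lprod (List.seq 8 K) (fun n => 1 + / INR n ^ 2)).
  - apply lprod_le. intros p Hp. apply List.in_seq in Hp.
    have Hp' : 8 <= INR p by (replace 8 with (INR 8) by (simpl; lra); apply le_INR; lia).
    have Hsq : 0 <= / INR p ^ 2 by (apply Rlt_le, Rinv_0_lt_compat; nra).
    destruct (prime.prime p); [|lra].
    unfold rr, efac. have -> : (p <= 7)%N = false by lia.
    replace (1 + / INR p - 1) with (/ INR p) by ring.
    replace (/ INR p / INR p) with (/ INR p ^ 2) by (field; repeat split; lra). lra.
  - have Hs := sum_inv_sq 8 K ltac:(lia).
    have E8 : INR 8 - 1 = 7 by (simpl; lra). rewrite E8 in Hs.
    have HK : 0 < / (7 + INR K) by (apply Rinv_0_lt_compat; have := pos_INR K; lra).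
    have Hs' : lsum (List.seq 8 K) (fun n => / INR n ^ 2) <= 1/7 by lra.
    have Hs0 : 0 <= lsum (List.seq 8 K) (fun n => / INR n ^ 2).
    { apply lsum_nonneg. intros n Hn. apply List.in_seq in Hn. apply Rlt_le, Rinv_0_lt_compat, pow_lt, lt_0_INR. lia. }
    apply Rle_trans with (/ (1 - lsum (List.seq 8 K) (fun n => / INR n ^ 2))).
    + apply prod_le_inv; [|lra]. intros n Hn. apply List.in_seq in Hn. apply Rlt_le, Rinv_0_lt_compat, pow_lt, lt_0_INR. lia.
    + replace (7/6) with (/ (1 - 1/7)) by field. apply Rinv_le_contravar; lra.
Qed.


Open Scope R_scope.

Definition Tsum (M K : nat) : R :=
  lsum (List.seq 0 (S K)) (fun t => if (M <= t)%N then Bt t / INR t ^ 2 else 0).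

Lemma allprime_Pn n : allprime (Pn n).
Proof. intros p Hp. now apply In_Pn in Hp as [Hp _]. Qed.

Lemma NoDup_Pn n : NoDup (Pn n).
Proof. apply List.NoDup_filter, List.seq_NoDup. Qed.

Lemma A7_pos : 0 < A7.
Proof. rewrite A7_val. lra. Qed.

Lemma Bt_le t K : (1 <= t)%N -> (t <= K + 7)%N ->
  Bt t <= A7 * lsum (subs (Pn (K + 7))) (fun x => if snd x %| t then fst x else 0).
Proof. intros H1 H2. unfold Bt. rewrite (primes_filter t H1 (K + 7) H2) lprod_filter.
  apply Rmult_le_compat_l; [have := A7_pos; lra|]. apply subs_dvd; [apply allprime_Pn| apply NoDup_Pn]. Qed.

Lemma per_x (M d : nat) (rho W : R) : (1 <= M)%N -> (1 <= d)%N -> 0 <= rho -> rho * INR d <= W ->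
  INR M * (rho * Pd d (Rmax (INR M) (INR d))) <= rho / INR d + W * phi M d.
Proof. intros HM Hd Hr HW.
  have HMr : 1 <= INR M by apply (le_INR 1); lia.
  have Hdr : 1 <= INR d by apply (le_INR 1); lia.
  unfold phi, Pd. destruct (d <= M)%N eqn:E.
  - have HdM : INR d <= INR M by apply le_INR; lia.
    rewrite Rmax_left //.
    have Hrw : rho <= W / INR d by apply Rcomplements.Rle_div_r; lra.
    replace (INR M * (rho * (2 / (INR d * (2 * INR M - INR d)))))
      with (rho / INR d + rho / (2 * INR M - INR d)) by (field; repeat split; lra).
    have : rho / (2 * INR M - INR d) <= rho / INR M.
    { unfold Rdiv. apply Rmult_le_compat_l; [lra|]. apply Rinv_le_contravar; lra. }
    have : rho / INR M <= W * / (INR M * INR d).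
    { replace (W * / (INR M * INR d)) with ((W / INR d) / INR M) by (field; lra).
      unfold Rdiv. apply Rmult_le_compat_r; [apply Rlt_le, Rinv_0_lt_compat; lra|]. exact Hrw. }
    lra.
  - have HdM : INR M <= INR d by apply le_INR; lia.
    rewrite Rmax_right //.
    replace (2 * INR d - INR d) with (INR d) by ring.
    have Hrw : rho <= W / INR d by apply Rcomplements.Rle_div_r; lra.
    have Hq : 0 <= rho / INR d by apply Rcomplements.Rdiv_le_0_compat; lra.
    replace (INR M * (rho * (2 / (INR d * INR d)))) with (2 * INR M / (INR d * INR d) * rho) by (field; lra).
    replace (W * (2 * INR M / INR d ^ 3)) with (2 * INR M / (INR d * INR d) * (W / INR d)) by (field; lra).
    have Hc : 0 <= 2 * INR M / (INR d * INR d) by apply Rcomplements.Rdiv_le_0_compat; nra.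
    have := Rmult_le_compat_l _ _ _ Hc Hrw. lra.
Qed.

Lemma Wc_val K : lprod (Pn (K + 7)) mfac = 44100 / 3895.
Proof. rewrite Pn_split lprod_cat Wc7 lprod_one; [lra|].
  intros p Hp. apply List.filter_In in Hp as [Hp _]. apply List.in_seq in Hp.
  unfold mfac. have -> : (p <= 7)%N = false by lia. reflexivity. Qed.

Lemma euler_val K : A7 * lprod (Pn (K + 7)) (fun p => 1 + rr p / INR p) <= 7 / 6.
Proof. rewrite Pn_split lprod_cat E7 A7_val.
  have := rest_euler K. 
  have : 0 <= lprod (List.filter prime.prime (List.seq 8 K)) (fun p => 1 + rr p / INR p).
  { apply lprod_nonneg. intros p Hp. apply List.filter_In in Hp as [Hp1 Hp2].
    have := rr_nonneg p Hp2. have : 0 < INR p by apply lt_0_INR; apply List.in_seq in Hp1; lia.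
    intros. have : 0 <= rr p / INR p by apply Rcomplements.Rdiv_le_0_compat; lra. lra. }
  intros. replace (779 / 2016 * (2016 / 779 * lprod (List.filter prime.prime (List.seq 8 K)) (fun p => 1 + rr p / INR p)))
    with (lprod (List.filter prime.prime (List.seq 8 K)) (fun p => 1 + rr p / INR p)) by field. lra.
Qed.

Theorem tail_bound M K : (1 <= M)%N -> INR M * Tsum M K <= 7 / 6 + 35 / 8 * ((H M + 2) / INR M).
Proof. intros HM.
  set L := Pn (K + 7).
  have HAL := allprime_Pn (K + 7). have HND := NoDup_Pn (K + 7). fold L in HAL, HND.
  have HA7 := A7_pos.
  have HMr : 0 < INR M by apply lt_0_INR; lia.
  have S1 : Tsum M K <= A7 * lsum (subs L) (fun x => fst x * lsum (List.seq 0 (S K)) (fd M (snd x))).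
  { unfold Tsum.
    apply Rle_trans with (lsum (List.seq 0 (S K)) (fun t => A7 * lsum (subs L) (fun x => fst x * fd M (snd x) t))).
    - apply lsum_le. intros t Ht. apply List.in_seq in Ht.
      destruct (M <= t)%N eqn:E.
      + have Ht1 : (1 <= t)%N by lia.
        have Htp : 0 < INR t by apply lt_0_INR; lia.
        have := Bt_le t K Ht1 ltac:(lia). fold L. intros HB.
        have -> : lsum (subs L) (fun x => fst x * fd M (snd x) t)
                 = / INR t ^ 2 * lsum (subs L) (fun x => if snd x %| t then fst x else 0).
        { rewrite lsum_scal. apply lsum_ext. intros x _. unfold fd. rewrite E /=.
          destruct (snd x %| t); ring. }
        have Hi : 0 < / INR t ^ 2 by apply Rinv_0_lt_compat, pow_lt.
        unfold Rdiv. rewrite (Rmult_comm (Bt t)). 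
        replace (A7 * (/ INR t ^ 2 * lsum (subs L) (fun x => if snd x %| t then fst x else 0)))
          with (/ INR t ^ 2 * (A7 * lsum (subs L) (fun x => if snd x %| t then fst x else 0))) by ring.
        apply Rmult_le_compat_l; lra.
      + rewrite (lsum_ext _ _ (fun _ => 0)). rewrite lsum_zero. lra.
        intros x _. unfold fd. rewrite E /=. ring.
    - rewrite -lsum_scal lsum_exchange. apply Req_le. f_equal. apply lsum_ext. intros x _.
      rewrite lsum_scal. reflexivity. }
  set Wc := lprod L mfac.
  have S2 : INR M * (A7 * lsum (subs L) (fun x => fst x * lsum (List.seq 0 (S K)) (fd M (snd x))))
            <= A7 * (lsum (subs L) (fun x => fst x / INR (snd x)) + Wc * lsum (List.map snd (subs L)) (phi M)).
  { have Eq : A7 * (lsum (subs L) (fun x => fst x / INR (snd x)) + Wc * lsum (List.map snd (subs L)) (phi M))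
      = A7 * lsum (subs L) (fun x => fst x / INR (snd x) + Wc * phi M (snd x)).
    { rewrite lsum_plus lsum_map (lsum_scal _ (fun x => phi M (snd x)) Wc). reflexivity. }
    rewrite Eq.
    replace (INR M * (A7 * lsum (subs L) (fun x => fst x * lsum (List.seq 0 (S K)) (fd M (snd x)))))
      with (A7 * (INR M * lsum (subs L) (fun x => fst x * lsum (List.seq 0 (S K)) (fd M (snd x))))) by ring.
    apply Rmult_le_compat_l; [lra|]. rewrite (lsum_scal (subs L) _ (INR M)). apply lsum_le. intros x Hx.
    have [Hr Hd] := subs_pos L HAL x Hx.
    have HW := subs_weight L HAL x Hx. fold Wc in HW.
    have Hp := per_d (snd x) M K Hd HM.
    apply Rle_trans with (INR M * (fst x * Pd (snd x) (Rmax (INR M) (INR (snd x))))).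
    + apply Rmult_le_compat_l; [lra|]. apply Rmult_le_compat_l; lra.
    + apply per_x; auto. }
  have S3 : lsum (List.map snd (subs L)) (phi M) <= (H M + 2) / INR M.
  { apply Rle_trans with (lsum (List.seq 1 (natprod L)) (phi M)); [|apply phi_sum; lia].
    apply nodup_sum.
    - apply subs_nodup; auto.
    - intros d Hd. apply List.in_map_iff in Hd as [x [<- Hx]].
      have [_ Hd] := subs_pos L HAL x Hx. have Hdv := subs_divides L x Hx.
      have HL0 : (0 < natprod L)%N.
      { clear -HAL. induction L as [|p L IH]; [done|]. simpl. apply allprime_cons in HAL as [Hp HL].
        rewrite muln_gt0 prime_gt0 //=. now apply IH. }
      have := dvdn_leq HL0 Hdv. lia.
    - intros d Hd. apply phi_nonneg; lia. }
  have HWc : Wc = 44100 / 3895 by apply Wc_val.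
  have HE := euler_val K. fold L in HE.
  rewrite subs_euler // in S2.
  have Hph : 0 <= lsum (List.map snd (subs L)) (phi M).
  { apply lsum_nonneg. intros d Hd. apply List.in_map_iff in Hd as [x [<- Hx]].
    have [_ Hd] := subs_pos L HAL x Hx. apply phi_nonneg; lia. }
  have S0 : INR M * Tsum M K <= INR M * (A7 * lsum (subs L) (fun x => fst x * lsum (List.seq 0 (S K)) (fd M (snd x)))).
  { apply Rmult_le_compat_l; lra. }
  rewrite HWc in S2. rewrite A7_val in S2 HE S0.
  have : 779 / 2016 * (44100 / 3895 * lsum (List.map snd (subs L)) (phi M)) <= 35/8 * ((H M + 2) / INR M).
  { replace (779 / 2016 * (44100 / 3895 * lsum (List.map snd (subs L)) (phi M))) with (35/8 * lsum (List.map snd (subs L)) (phi M)) by field.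
    apply Rmult_le_compat_l; lra. }
  intros. lra.
Qed.


Open Scope R_scope.

Definition M0 : nat := 1000.
Open Scope Q_scope.
Definition natQ (n : nat) : Q := inject_Z (Z.of_nat n).
Definition efacQ (p : nat) : Q :=
  if (p <= 7)%N then (natQ p * natQ p - 1) / (natQ p * natQ p - natQ p - 1) else 1 + / natQ p.
Definition BtQ (t : nat) : Q := (779 # 2016) * fold_right (fun p acc => efacQ p * acc) 1%Q (primes t).
Definition termQ (t : nat) : Q := BtQ t / (natQ t * natQ t).
Definition HQ (n : nat) : Q := fold_right (fun d acc => (/ natQ d + acc)) 0%Q (List.seq 1 n).
Definition c0Q : Q := (7 # 6) + (35 # 8) * ((HQ M0 + 2) / natQ M0).

Definition DEN : positive := 1000000000000000%positive.
Definition roundQ (q : Q) : Q := Qmake (- ((- (Qnum q * Zpos DEN)) / Zpos (Qden q)))%Z DEN.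

Fixpoint chk (n M : nat) (acc : Q) : bool :=
  match n with
  | O => true
  | S n' => let acc' := roundQ (acc + termQ M) in
            Qle_bool (natQ M * (acc' + (1209 # 1000) / natQ M0)) (5 # 4) && chk n' (M - 1) acc'
  end.

Close Scope Q_scope.
Open Scope R_scope.

Lemma c0Q_ok : Qle_bool c0Q (1209 # 1000) = true.
Proof. vm_compute. reflexivity. Qed.
Lemma chk_ok : chk (M0 - 7) (M0 - 1) 0%Q = true.
Proof. vm_compute. reflexivity. Qed.

Lemma natQ_R n : Q2R (natQ n) = INR n.
Proof. unfold natQ, Q2R. simpl. rewrite Rinv_1 Rmult_1_r INR_IZR_INZ. reflexivity. Qed.

Lemma natQ_nz n : (1 <= n)%coq_nat -> ~ Qeq (natQ n) 0%Q.
Proof. intros H E. apply Qeq_eqR in E. rewrite natQ_R RMicromega.Q2R_0 in E.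
  have : 0 < INR n by apply lt_0_INR; lia. lra. Qed.

Lemma Q2R_one : Q2R 1%Q = 1.
Proof. exact RMicromega.Q2R_1. Qed.

Lemma den_nz p : INR p * INR p - INR p - 1 <> 0.
Proof. destruct p as [|[|p]].
  - simpl. lra.
  - simpl. lra.
  - have : 2 <= INR (S (S p)) by (replace 2 with (INR 2) by (simpl; lra); apply le_INR; lia).
    intros. nra. Qed.

Lemma efacQ_R p : Q2R (efacQ p) = efac p.
Proof. unfold efacQ, efac. destruct (p <= 7)%N eqn:E.
  - have Hnz : ~ Qeq (natQ p * natQ p - natQ p - 1) 0%Q.
    { intros Hq. apply Qeq_eqR in Hq. rewrite RMicromega.Q2R_0 !Q2R_minus Q2R_mult natQ_R Q2R_one in Hq.
      exact (den_nz p Hq). }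
    rewrite Q2R_div // !Q2R_minus Q2R_mult natQ_R Q2R_one. unfold cfac. f_equal; ring.
  - have Hp : (1 <= p)%coq_nat by lia.
    rewrite Q2R_plus Q2R_inv; [|exact (natQ_nz p Hp)]. rewrite natQ_R Q2R_one. reflexivity.
Qed.

Lemma foldQ_R l : Q2R (fold_right (fun p acc => (efacQ p * acc)%Q) 1%Q l) = lprod l efac.
Proof. induction l as [|a l IH]; simpl; [exact Q2R_one|]. rewrite Q2R_mult IH efacQ_R. reflexivity. Qed.

Lemma BtQ_R t : Q2R (BtQ t) = Bt t.
Proof. unfold BtQ, Bt. rewrite Q2R_mult foldQ_R A7_val. f_equal. Qed.

Lemma termQ_R t : (1 <= t)%coq_nat -> Q2R (termQ t) = Bt t / INR t ^ 2.
Proof. intros Ht. unfold termQ. have Hnz : ~ Qeq (natQ t * natQ t) 0%Q.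
  { intros Hq. apply Qeq_eqR in Hq. rewrite Q2R_mult natQ_R RMicromega.Q2R_0 in Hq.
    have : 0 < INR t by apply lt_0_INR; lia. nra. }
  rewrite Q2R_div // BtQ_R Q2R_mult natQ_R. f_equal. ring. Qed.

Lemma roundQ_ge q : Q2R q <= Q2R (roundQ q).
Proof. apply Qle_Rle. unfold Qle, roundQ. simpl.
  set n := Qnum q. set d := Z.pos (Qden q).
  have Hd : (0 < d)%Z by reflexivity.
  have Hdm := Z.div_mod (- (n * Z.pos DEN)) d ltac:(lia).
  have Hmb := Z.mod_pos_bound (- (n * Z.pos DEN)) d Hd.
  nia. Qed.

Definition FinR (m : nat) : R :=
  lsum (List.seq 0 M0) (fun t => if (m <= t)%N then Bt t / INR t ^ 2 else 0).

Lemma lsum_single_seq n m (g : nat -> R) : (m < n)%coq_nat ->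
  lsum (List.seq 0 n) (fun t => if Nat.eqb t m then g t else 0) = g m.
Proof. induction n as [|n IH]; intros Hm; [lia|].
  rewrite (List.seq_S n 0) lsum_app lsum_cons lsum_nil. simpl (0 + n)%coq_nat.
  destruct (Nat.eq_dec m n) as [->|Hne].
  - rewrite Nat.eqb_refl. rewrite (lsum_ext _ _ (fun _ => 0)); [rewrite lsum_zero; lra|].
    intros t Ht. apply List.in_seq in Ht. have -> : Nat.eqb t n = false by apply Nat.eqb_neq; lia. reflexivity.
  - rewrite IH; [|lia]. have -> : Nat.eqb n m = false by apply Nat.eqb_neq; lia. lra.
Qed.

Lemma FinR_step m : (m < M0)%N -> FinR m = Bt m / INR m ^ 2 + FinR (m + 1).
Proof. intros Hm. unfold FinR.
  rewrite (lsum_ext _ _ (fun t => (if Nat.eqb t m then Bt t / INR t ^ 2 else 0) + (if (m + 1 <= t)%N then Bt t / INR t ^ 2 else 0))).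
  - rewrite lsum_plus lsum_single_seq //. lia.
  - intros t _. destruct (Nat.eqb t m) eqn:E.
    + apply Nat.eqb_eq in E. rewrite E. have -> : (m <= m)%N by []. have -> : (m + 1 <= m)%N = false by lia. ring.
    + apply Nat.eqb_neq in E. destruct (m <= t)%N eqn:E2.
      * have -> : (m + 1 <= t)%N by lia. ring.
      * have -> : (m + 1 <= t)%N = false by lia. ring.
Qed.

Lemma Bt_nonneg t : 0 <= Bt t.
Proof. unfold Bt. apply Rmult_le_pos; [have := A7_pos; lra|]. apply lprod_nonneg.
  intros p Hp. have := efac_ge1 p (prime_ge2 p (In_primes p t Hp)). lra. Qed.

Lemma chk_correct n : forall M acc, chk n M acc = true -> FinR (M + 1) <= Q2R acc -> (M < M0)%N -> (n <= M)%N ->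
  forall M', (M - n < M')%N -> (M' <= M)%N -> INR M' * (FinR M' + 1209 / 1000 / INR M0) <= 5 / 4.
Proof. induction n as [|n IH]; intros M acc Hc HF HM Hn M' H1 H2; [lia|].
  simpl in Hc. apply andb_prop in Hc as [Hq Hc].
  set acc' := roundQ (acc + termQ M).
  have HFM : FinR M <= Q2R acc'.
  { rewrite FinR_step //. apply Rle_trans with (Q2R (acc + termQ M)); [|apply roundQ_ge].
    rewrite Q2R_plus termQ_R; [lra|lia]. }
  destruct (Nat.eq_dec M' M) as [->|Hne].
  - apply RMicromega.Qle_true in Hq. rewrite Q2R_mult Q2R_plus Q2R_div in Hq; [|apply natQ_nz; unfold M0; lia].
    rewrite !natQ_R in Hq. fold acc' in Hq.
    have E1 : Q2R (1209 # 1000) = 1209 / 1000 by (unfold Q2R; simpl; lra).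
    have E2 : Q2R (5 # 4) = 5 / 4 by (unfold Q2R; simpl; lra).
    rewrite E1 E2 in Hq.
    have := pos_INR M. nra.
  - apply (IH (M - 1)%N acc'); auto; try lia.
    have -> : (M - 1 + 1 = M)%N by lia. exact HFM.
Qed.

Lemma finite_part M : (7 <= M)%N -> (M < M0)%N -> INR M * (FinR M + 1209 / 1000 / INR M0) <= 5 / 4.
Proof. intros H1 H2. apply (chk_correct (M0 - 7) (M0 - 1) 0%Q chk_ok); try (unfold M0 in *; lia).
  rewrite RMicromega.Q2R_0. have -> : (M0 - 1 + 1 = M0)%N by (unfold M0; lia).
  unfold FinR. rewrite (lsum_ext _ _ (fun _ => 0)); [rewrite lsum_zero; lra|].
  intros t Ht. apply List.in_seq in Ht. have -> : (M0 <= t)%N = false by lia. reflexivity.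
Qed.


Open Scope R_scope.

Lemma HQ_R_gen a n : (1 <= a)%coq_nat ->
  Q2R (fold_right (fun d acc => (/ natQ d + acc)%Q) 0%Q (List.seq a n)) = lsum (List.seq a n) (fun d => / INR d).
Proof. revert a. induction n as [|n IH]; intros a Ha; simpl; [exact RMicromega.Q2R_0|].
  rewrite Q2R_plus Q2R_inv; [|apply natQ_nz; lia]. rewrite natQ_R IH; [|lia]. reflexivity. Qed.

Lemma c0_bound : 7 / 6 + 35 / 8 * ((H M0 + 2) / INR M0) <= 1209 / 1000.
Proof. have Hq := RMicromega.Qle_true _ _ c0Q_ok. unfold c0Q in Hq.

  have HM : ~ Qeq (natQ M0) 0%Q by (apply natQ_nz; unfold M0; lia).
  rewrite Q2R_plus Q2R_mult Q2R_div // Q2R_plus natQ_R in Hq.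
  unfold HQ in Hq. rewrite HQ_R_gen in Hq; [|lia]. fold (H M0) in Hq.
  have E1 : Q2R (1209 # 1000) = 1209 / 1000 by (unfold Q2R; simpl; lra).
  have E2 : Q2R (7 # 6) = 7 / 6 by (unfold Q2R; simpl; lra).
  have E3 : Q2R (35 # 8) = 35 / 8 by (unfold Q2R; simpl; lra).
  have E4 : Q2R 2%Q = 2 by (unfold Q2R; simpl; lra).
  rewrite E1 E2 E3 E4 in Hq. exact Hq.
Qed.

Lemma lsum_prefix (g : nat -> R) n m : (forall t, 0 <= g t) -> (forall t, (m <= t)%N -> g t = 0) ->
  lsum (List.seq 0 n) g <= lsum (List.seq 0 m) g.
Proof. intros Hg Hz. destruct (le_lt_dec n m) as [H|H].
  - replace m with (n + (m - n))%coq_nat by lia. rewrite List.seq_app lsum_app.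
    rewrite -{1}(Rplus_0_r (lsum (List.seq 0 n) g)). apply Rplus_le_compat_l. apply lsum_nonneg; auto.
  - replace n with (m + (n - m))%coq_nat by lia. rewrite List.seq_app lsum_app.
    rewrite (lsum_ext (List.seq (0 + m) (n - m)) _ (fun _ => 0)); [rewrite lsum_zero; lra|].
    intros t Ht. apply List.in_seq in Ht. apply Hz. lia.
Qed.

Lemma Tsum_split M K : (M <= M0)%N -> Tsum M K <= FinR M + Tsum M0 K.
Proof. intros HM. unfold Tsum.
  set f := fun t => Bt t / INR t ^ 2.
  have Hf : forall t, 0 <= f t.
  { intros t. unfold f. destruct t as [|t].
    - have -> : INR 0 ^ 2 = 0 by simpl; ring. unfold Rdiv. rewrite Rinv_0 Rmult_0_r. lra.
    - have := Bt_nonneg (S t). have : 0 < INR (S t) ^ 2 by apply pow_lt, lt_0_INR; lia.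
      intros. apply Rcomplements.Rdiv_le_0_compat; lra. }
  rewrite (lsum_ext _ (fun t => if (M <= t)%N then f t else 0)
     (fun t => (if (M <= t)%N && (t < M0)%N then f t else 0) + (if (M0 <= t)%N then f t else 0))).
  2:{ intros t _. destruct (M <= t)%N eqn:E1; destruct (t < M0)%N eqn:E2; simpl.
      - have -> : (M0 <= t)%N = false by lia. ring.
      - have -> : (M0 <= t)%N by lia. ring.
      - have -> : (M0 <= t)%N = false by lia. ring.
      - have -> : (M0 <= t)%N = false by lia. ring. }
  rewrite lsum_plus. apply Rplus_le_compat_r. unfold FinR.
  apply Rle_trans with (lsum (List.seq 0 M0) (fun t => if (M <= t)%N && (t < M0)%N then f t else 0)).
  - apply lsum_prefix.
    + intros t. destruct ((M <= t)%N && (t < M0)%N); [apply Hf|lra].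
    + intros t Ht. have -> : (t < M0)%N = false by lia. rewrite andbF. reflexivity.
  - apply Req_le. apply lsum_ext. intros t Ht. apply List.in_seq in Ht.
    have -> : (t < M0)%N by lia. rewrite andbT. reflexivity.
Qed.

Theorem tail_final M K : (7 <= M)%N -> INR M * Tsum M K <= 5 / 4.
Proof. intros HM7. have Hc := c0_bound.
  have HM0r : 0 < INR M0 by (unfold M0; apply lt_0_INR; lia).
  destruct (M0 <= M)%N eqn:E.
  - have := tail_bound M K ltac:(lia). have := Hratio M0 M ltac:(unfold M0; lia) ltac:(lia).
    intros. lra.
  - have HMl : (M < M0)%N by lia.
    have Hf := finite_part M HM7 HMl.
    have Hs := Tsum_split M K ltac:(lia).
    have Ht0 := tail_bound M0 K ltac:(unfold M0; lia).
    have HT0 : Tsum M0 K <= 1209 / 1000 / INR M0.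
    { apply Rcomplements.Rle_div_r; [lra|]. rewrite Rmult_comm. lra. }
    have : 0 <= INR M by apply pos_INR.
    intros. apply Rle_trans with (INR M * (FinR M + 1209 / 1000 / INR M0)); [|exact Hf].
    apply Rmult_le_compat_l; lra.
Qed.


Open Scope R_scope.

Lemma sum_n_lsum (f : nat -> R) n : sum_n f n = lsum (List.seq 0 (S n)) f.
Proof. induction n as [|n IH].
  - rewrite sum_O. simpl. lra.
  - rewrite sum_Sn IH (List.seq_S (S n) 0) lsum_app lsum_cons lsum_nil. simpl. unfold plus. simpl. lra.
Qed.

Lemma r_pos t : (1 <= t)%coq_nat -> 0 < r t.
Proof. intros Ht. rewrite r_eq. apply Rmult_lt_0_compat.
  - apply Rinv_0_lt_compat, pow_lt, lt_0_INR. lia.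
  - apply lprod_pos. intros p Hp. apply cfac_pos, prime_ge2. exact: In_primes Hp.
Qed.

Lemma rterm_nonneg a d t : 0 <= rterm a d t.
Proof. unfold rterm. destruct (Nat.leb 1 t) eqn:E; simpl; [|lra].
  destruct (congb t a d); [|lra]. apply Rlt_le, r_pos. apply Nat.leb_le in E. lia. Qed.

Lemma rterm_le_r a d t : (1 <= t)%coq_nat -> rterm a d t <= r t.
Proof. intros Ht. have := r_pos t Ht. unfold rterm. destruct (Nat.leb 1 t && congb t a d); lra. Qed.

Lemma sum_n_mono (f : nat -> R) m n : (forall k, 0 <= f k) -> (m <= n)%coq_nat -> sum_n f m <= sum_n f n.
Proof. intros Hf H. induction n as [|n IH].
  - have -> : m = 0%nat by lia. lra.
  - destruct (Nat.eq_dec m (S n)) as [->|Hne]; [lra|].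
    rewrite sum_Sn. unfold plus; simpl. have := Hf (S n). have := IH ltac:(lia). lra.
Qed.

Lemma lsum_head (g : nat -> R) N K : (N <= K)%coq_nat ->
  lsum (List.seq 0 (S K)) (fun t => if (t <= N)%N then g t else 0) = lsum (List.seq 0 (S N)) g.
Proof. intros H. replace (S K) with (S N + (K - N))%coq_nat by lia.
  rewrite List.seq_app lsum_app.
  rewrite (lsum_ext (List.seq (0 + S N) (K - N)) _ (fun _ => 0)).
  - rewrite lsum_zero Rplus_0_r. apply lsum_ext. intros t Ht. apply List.in_seq in Ht.
    have -> : (t <= N)%N by lia. reflexivity.
  - intros t Ht. apply List.in_seq in Ht. have -> : (t <= N)%N = false by lia. reflexivity.
Qed.

Lemma partial_tail a d N K : (6 <= N)%coq_nat ->
  A * (sum_n (rterm a d) K - sum_n (rterm a d) N) <= 5 / 4 / INR (N + 1).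
Proof. intros HN. have HA := A_ge. have HM : 0 < INR (N + 1) by apply lt_0_INR; lia.
  have Hb : 0 <= 5 / 4 / INR (N+1) by (apply Rcomplements.Rdiv_le_0_compat; lra).
  destruct (le_lt_dec N K) as [HK|HK].
  - rewrite !sum_n_lsum.
    rewrite (lsum_ext (List.seq 0 (S K)) (rterm a d)
       (fun t => (if (t <= N)%N then rterm a d t else 0) + (if (N + 1 <= t)%N then rterm a d t else 0))).
    2:{ intros t _. destruct (t <= N)%N eqn:E.
        - have -> : (N + 1 <= t)%N = false by lia. ring.
        - have -> : (N + 1 <= t)%N by lia. ring. }
    rewrite lsum_plus lsum_head //.
    have HT := tail_final (N + 1) K ltac:(lia).
    set X := lsum (List.seq 0 (S K)) (fun t => if (N + 1 <= t)%N then rterm a d t else 0).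
    have HX : A * X <= Tsum (N + 1) K.
    { unfold Tsum. rewrite lsum_scal. apply lsum_le. intros t _. destruct (N + 1 <= t)%N eqn:E; [|lra].
      have Ht : (1 <= t)%N by lia.
      change (A * rterm a d t <= Bt t / INR t ^ 2).
      have H1 := pointwise t Ht. have H2 := rterm_le_r a d t ltac:(lia).
      apply Rle_trans with (A * r t); [apply Rmult_le_compat_l; lra| exact H1]. }
    apply (Rcomplements.Rle_div_r _ _ _ HM).
    set P := lsum (List.seq 0 (S N)) (rterm a d).
    replace (A * (P + X - P) * INR (N + 1)) with ((A * X) * INR (N + 1)) by ring.
    apply Rle_trans with (Tsum (N + 1) K * INR (N + 1)).
    + apply Rmult_le_compat_r; lra.
    + rewrite Rmult_comm. exact HT.
  - have : sum_n (rterm a d) K <= sum_n (rterm a d) N.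
    { apply sum_n_mono; [apply rterm_nonneg| lia]. }
    intros. nra.
Qed.

Lemma exists_t0 a d N : (1 <= d)%coq_nat -> exists t0, (N < t0)%coq_nat /\ 0 < rterm a d t0.
Proof. intros Hd.
  set u := ((a - Z.of_nat (N + 1)) mod Z.of_nat d)%Z.
  have Hdpos : (0 < Z.of_nat d)%Z by lia.
  have Hu := Z.mod_pos_bound (a - Z.of_nat (N + 1)) (Z.of_nat d) Hdpos. fold u in Hu.
  have Hdm := Z.div_mod (a - Z.of_nat (N + 1)) (Z.of_nat d) ltac:(lia). fold u in Hdm.
  set q := ((a - Z.of_nat (N + 1)) / Z.of_nat d)%Z in Hdm.
  exists (N + 1 + Z.to_nat u)%coq_nat. split; [lia|].
  unfold rterm. have -> : Nat.leb 1 (N + 1 + Z.to_nat u)%coq_nat = true by apply Nat.leb_le; lia.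
  have -> : congb (N + 1 + Z.to_nat u)%coq_nat a d = true.
  { unfold congb. apply Z.eqb_eq.
    have -> : (Z.of_nat (N + 1 + Z.to_nat u)%coq_nat - a = (- q) * Z.of_nat d)%Z by lia.
    apply Z_mod_mult. }
  simpl. apply r_pos. lia.
Qed.

Lemma main_aux (a : Z) (d : nat) (x : R) :
  (1 <= d)%coq_nat -> 6 <= x ->
  0 < rho a d - A * sum_n (rterm a d) (Z.to_nat (Int_part x)) /\
  rho a d - A * sum_n (rterm a d) (Z.to_nat (Int_part x)) < (128 / 100) / x.
Proof. intros Hd Hx.
  have [Hi1 Hi2] := base_Int_part x.
  have HI6 : (6 <= Int_part x)%Z.
  { have : (5 < Int_part x)%Z by (apply lt_IZR; lra). lia. }
  set N := Z.to_nat (Int_part x).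
  have HN : INR N = IZR (Int_part x) by (unfold N; rewrite INR_IZR_INZ Z2Nat.id //; lia).
  have HN6 : (6 <= N)%coq_nat by (unfold N; lia).
  have HA := A_ge.
  pose (s := fun n : nat => (sum_n (rterm a d) n : R)).
  change (0 < rho a d - A * s N /\ rho a d - A * s N < 128 / 100 / x).
  have Hinc : forall n, s n <= s (S n).
  { intros n. unfold s. rewrite sum_Sn. unfold plus; simpl. have := rterm_nonneg a d (S n). lra. }
  have Hbd : forall K, s K <= s N + 5 / 4 / INR (N + 1) / A.
  { intros K. have H1 : A * (s K - s N) <= 5 / 4 / INR (N + 1) := partial_tail a d N K HN6.
    apply Rle_trans with (s N + (A * (s K - s N)) / A).
    - apply Req_le. field. lra.
    - have : A * (s K - s N) / A <= 5 / 4 / INR (N + 1) / A.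
      { unfold Rdiv at 1 3. apply Rmult_le_compat_r; [apply Rlt_le, Rinv_0_lt_compat; lra| exact H1]. }
      lra. }
  have Hex : ex_finite_lim_seq s by (apply ex_finite_lim_seq_incr with (M := s N + 5 / 4 / INR (N + 1) / A); auto).
  destruct Hex as [l Hl].
  have HS : Series (rterm a d) = l.
  { unfold Series. fold s. rewrite (is_lim_seq_unique _ _ Hl). reflexivity. }
  have Hrho : rho a d - A * s N = A * (l - s N) by (unfold rho; rewrite HS; ring).
  fold s. rewrite Hrho.
  have Hup : l <= s N + 5 / 4 / INR (N + 1) / A.
  { have := is_lim_seq_le s (fun _ => s N + 5 / 4 / INR (N + 1) / A) l (s N + 5 / 4 / INR (N + 1) / A) Hbd Hl (is_lim_seq_const _).
    simpl. auto. }
  have [t0 [Ht0 Hr0]] := exists_t0 a d N Hd.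
  have Hstep : forall k, s N + rterm a d (N + S k)%coq_nat <= s (N + S k)%coq_nat.
  { intros k. induction k as [|k IH].
    - rewrite Nat.add_1_r. unfold s. rewrite sum_Sn. unfold plus; simpl. lra.
    - rewrite Nat.add_succ_r. unfold s in *. rewrite sum_Sn. unfold plus; simpl.
      have := rterm_nonneg a d (N + S k)%coq_nat. lra. }
  have Hlo : s N + rterm a d t0 <= l.
  { apply Rle_trans with (s t0); [|apply is_lim_seq_incr_compare; auto].
    have E : t0 = (N + S (t0 - S N))%coq_nat by lia. rewrite E. apply Hstep. }
  have HxN : x < INR (N + 1) by (rewrite plus_INR HN; simpl; lra).
  have Hx0 : 0 < x by lra.
  split.
  - apply Rmult_lt_0_compat; lra.
  - apply Rle_lt_trans with (5 / 4 / INR (N + 1)).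
    + apply Rle_trans with (A * (5 / 4 / INR (N + 1) / A)).
      * apply Rmult_le_compat_l; lra.
      * apply Req_le. field. lra.
    + apply Rlt_le_trans with (5 / 4 / x).
      * unfold Rdiv. apply Rmult_lt_compat_l; [lra|]. apply Rinv_lt_contravar; nra.
      * unfold Rdiv. apply Rmult_le_compat_r; [apply Rlt_le, Rinv_0_lt_compat; lra| lra].
Qed.


Theorem mainTheorem17 (a : Z) (d : nat) (x : R) :
  (1 <= d)%coq_nat -> 6 <= x ->
  0 < rho a d - A * sum_n (rterm a d) (Z.to_nat (Int_part x)) /\
  rho a d - A * sum_n (rterm a d) (Z.to_nat (Int_part x)) < (128 / 100) / x.
Proof. exact (main_aux a d x). Qed.
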